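(* Let $\mathcal{C}$ be a concept class over $\{\pm1\}^n$, $\mathcal{D}$ a class of distributions closed under restrictions, $D^\star$ a distribution with a depth-$d$ decomposition into distributions in $\mathcal{D}$, and $A$ a base learner using $m$ samples that learns $\mathcal{C}$ to expected error $\le\varepsilon$ under any $D\in\mathcal{D}$. Let \[ m_{\mathrm{train}} \ge \frac{2^d}{\varepsilon}\cdot\max(2m, 8), \] let $f\in\mathcal{C}$, and let $S_{\mathrm{train}}$ consist of $m_{\mathrm{train}}$ i.i.d. examples from $D^\star_f$. Let $\mathcal{H}$ be the random mapping $\rho\mapsto A((S_{\mathrm{train}})_\rho)$ over all depth-$d$ restrictions $\rho$ (randomness from $S_{\mathrm{train}}$ and $A$). Then \[ \mathbb{E}_{\mathcal{H}}\left[\min_{\text{depth-}d\text{ tree }T} \mathrm{error}(T\circ\mathcal{H}, D^\star_f)\right] \le 2\varepsilon. \]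
   Context: A restriction is $\rho\in\{\pm1,\star\}^n$; $x\in\rho$ means $x_i=\rho_i$ or $\rho_i=\star$ for all $i$; depth of $\rho$ = number of non-$\star$ coordinates. $D_\rho$ is $D$ conditioned on $x\in\rho$; for a labeled set $S$, $S_\rho=\{(x,y)\in S:x\in\rho\}$. $\mathcal{D}$ is closed under restrictions if $D\in\mathcal{D}\Rightarrow D_\rho\in\mathcal{D}$ for all $\rho$. $D_f$ is the distribution of $(x,f(x))$, $x\sim D$; $\mathrm{error}(h,P)=\Pr_{(x,y)\sim P}[h(x)\ne y]$. $A$ learns $\mathcal{C}$ to expected error $\varepsilon$ under $D$ using $m$ samples if for every $f\in\mathcal{C}$, given (at least) $m$ i.i.d. samples from $D_f$, its output $h$ has $\mathbb{E}[\mathrm{error}(h,D_f)]\le\varepsilon$. A depth-$d$ decision tree is a set of $2^d$ leaf restrictions defined recursively: depth $0$ is the all-$\star$ restriction; depth $d\ge1$ has a root coordinate $i$ and two depth-$(d-1)$ subtrees not fixing $i$, whose leaves get coordinate $i$ set to $-1$ and $+1$. $D^\star$ has a depth-$d$ decomposition into $\mathcal{D}$ if some depth-$d$ tree $T$ has $(D^\star)_\ell\in\mathcal{D}$ for every leaf $\ell$. $T\circ\mathcal{H}(x)=\mathcal{H}(\ell)(x)$ for the leaf $\ell$ of $T$ containing $x$. *)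

(* Defs.v *)
(* everything is finite ({±1}^n is finite), so all
   probabilities/expectations are finite sums over an arbitrary real field. *)
From mathcomp Require Import all_boot all_order all_algebra.
Set Implicit Arguments. Unset Strict Implicit. Unset Printing Implicit Defensive.
Import Order.TTheory GRing.Theory Num.Theory.
Local Open Scope ring_scope.

(* points of {±1}^n : true = +1, false = -1 *)
Definition pt (n : nat) := {ffun 'I_n -> bool}.
(* restrictions rho in {±1,*}^n : None = *, Some b = fixed value b *)
Definition rst (n : nat) := {ffun 'I_n -> option bool}.
Definition hyp (n : nat) := {ffun pt n -> bool}.

Definition in_rst n (x : pt n) (r : rst n) : bool :=
  [forall i, (r i == None) || (r i == Some (x i))].

Definition depth n (r : rst n) : nat := #|[set i | r i != None]|.

Definition star n : rst n := [ffun _ => None].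

Definition fix_coord n (r : rst n) (i : 'I_n) (b : bool) : rst n :=
  [ffun j => if j == i then Some b else r j].

(* T is (the set of leaves of) a depth-d decision tree, defined recursively *)
Fixpoint is_tree n (d : nat) (T : {set rst n}) : bool :=
  match d with
  | 0 => T == [set star n]
  | d'.+1 =>
    [exists i : 'I_n, exists T0 : {set rst n}, exists T1 : {set rst n},
      [&& is_tree d' T0, is_tree d' T1,
          [forall l in T0, l i == None], [forall l in T1, l i == None] &
          T == ((fun l => fix_coord l i false) @: T0)
               :|: ((fun l => fix_coord l i true) @: T1)]]
  end.

Definition is_dist (R : realFieldType) (T : finType) (P : {ffun T -> R}) : Prop :=
  (forall t, 0 <= P t) /\ \sum_t P t = 1.

Definition mass (R : realFieldType) n (D : {ffun pt n -> R}) (r : rst n) : R :=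
  \sum_(x | in_rst x r) D x.

Definition cond (R : realFieldType) n (D : {ffun pt n -> R}) (r : rst n)
  : {ffun pt n -> R} :=
  [ffun x => if in_rst x r then D x / mass D r else 0].

(* closed under restrictions (conditioning is defined when D(rho) > 0) *)
Definition closed_under_restrictions (R : realFieldType) n
  (Dc : {ffun pt n -> R} -> Prop) : Prop :=
  forall (D : {ffun pt n -> R}) (r : rst n), Dc D -> 0 < mass D r -> Dc (cond D r).

Definition error (R : realFieldType) n (h : hyp n) (D : {ffun pt n -> R})
  (f : hyp n) : R :=
  \sum_x D x * (h x != f x)%:R.

(* depth-d decomposition of D into Dc (leaves of zero mass impose nothing) *)
Definition has_decomposition (R : realFieldType) n (D : {ffun pt n -> R})
  (Dc : {ffun pt n -> R} -> Prop) (d : nat) : Prop :=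
  exists T : {set rst n}, is_tree d T /\
    forall l, l \in T -> 0 < mass D l -> Dc (cond D l).

Definition sample n k (xs : {ffun 'I_k -> pt n}) (f : hyp n) : seq (pt n * bool) :=
  [seq (xs i, f (xs i)) | i <- enum 'I_k].

Definition restrict_sample n (S : seq (pt n * bool)) (r : rst n) :=
  [seq p <- S | in_rst p.1 r].

(* randomized learner: sample -> distribution over output hypotheses *)
Definition learner (R : realFieldType) n := seq (pt n * bool) -> {ffun hyp n -> R}.

Definition learns (R : realFieldType) n (C : hyp n -> Prop)
  (Dc : {ffun pt n -> R} -> Prop) (A : learner R n) (m : nat) (eps : R) : Prop :=
  forall (D : {ffun pt n -> R}) (f : hyp n), Dc D -> C f ->
  forall k : nat, (m <= k)%N ->
    \sum_(xs : {ffun 'I_k -> pt n}) (\prod_i D (xs i)) *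
       (\sum_(h : hyp n) A (sample xs f) h * error h D f) <= eps.

Definition tree_comp n (T : {set rst n}) (H : {ffun rst n -> hyp n}) : hyp n :=
  [ffun x => if [pick l in T | in_rst x l] is Some l then H l x else false].

(* min over depth-d trees T of error(T o H, D_f); 1 is the neutral element
   (all errors are <= 1 and the set of depth-d trees is nonempty under the
   decomposition hypothesis) *)
Definition min_tree_error (R : realFieldType) n (d : nat)
  (H : {ffun rst n -> hyp n}) (D : {ffun pt n -> R}) (f : hyp n) : R :=
  \big[Order.min/1]_(T : {set rst n} | is_tree d T) error (tree_comp T H) D f.

(* E_H [ min_T error(T o H, D_f) ] where S_train ~ (D_f)^mt and
   H(rho) = A((S_train)_rho), independently for each restriction rho *)
Definition expected_min_tree_error (R : realFieldType) n (A : learner R n)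
  (Ds : {ffun pt n -> R}) (f : hyp n) (d mt : nat) : R :=
  \sum_(xs : {ffun 'I_mt -> pt n}) (\prod_i Ds (xs i)) *
    (\sum_(H : {ffun rst n -> hyp n})
        (\prod_(r : rst n) A (restrict_sample (sample xs f) r) (H r)) *
        min_tree_error d H Ds f).

(* Main.v *)
Require Import Defs.
From mathcomp Require Import all_boot all_order all_algebra.
From mathcomp Require Import ring lra.
Import Order.TTheory GRing.Theory Num.Theory.
Set Implicit Arguments. Unset Strict Implicit. Unset Printing Implicit Defensive.
Local Open Scope ring_scope.

Lemma in_fix n (x : pt n) (l : rst n) (i : 'I_n) (b : bool) :
  l i = None -> in_rst x (fix_coord l i b) = (x i == b) && in_rst x l.
Proof.
move=> li; apply/forallP/andP => [H | [/eqP xi /forallP H] j].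
  split; first by have := H i; rewrite ffunE eqxx /= => /eqP [->].
  apply/forallP => j; have := H j; rewrite ffunE.
  have [->|//] := eqVneq j i.
  by rewrite li.
rewrite ffunE; have [->|_] := eqVneq j i; last exact: H.
by rewrite xi eqxx orbT.
Qed.

Lemma tree_part n d (T : {set rst n}) : is_tree d T ->
  (#|T| <= 2 ^ d)%N /\ forall x : pt n, exists l, [/\ l \in T, in_rst x l &
     forall l', l' \in T -> in_rst x l' -> l' = l].
Proof.
elim: d T => [|d IH] T /=.
  move/eqP => ->; rewrite cards1; split => // x; exists (star n); split.
  - by rewrite in_set1.
  - by apply/forallP => i; rewrite ffunE.
  - by move=> l'; rewrite in_set1 => /eqP.
case/existsP => i /existsP [T0 /existsP [T1 /and5P [t0 t1 /forall_inP n0 /forall_inP n1 /eqP ->]]].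
have [c0 p0] := IH _ t0; have [c1 p1] := IH _ t1.
split.
  apply: leq_trans (leq_card_setU _ _).1 _.
  rewrite expnS mul2n -addnn; apply: leq_add.
    exact: leq_trans (leq_imset_card _ _) c0.
  exact: leq_trans (leq_imset_card _ _) c1.
move=> x.
have fixi : forall (T' : {set rst n}) (b : bool) (l' : rst n), (forall l, l \in T' -> l i == None) ->
  l' \in [set fix_coord l i b | l in T'] -> in_rst x l' ->
  exists2 l, l \in T' & l' = fix_coord l i b /\ in_rst x l /\ x i = b.
  move=> T' b l' nT' /imsetP [l lT ->]; rewrite in_fix; last exact/eqP/nT'.
  by case/andP => /eqP xi xl; exists l.
case Exi: (x i).
  have [l [lT xl ul]] := p1 x.
  exists (fix_coord l i true); split.
  - by rewrite inE; apply/orP; right; apply/imsetP; exists l.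
  - by rewrite in_fix ?Exi ?xl //; apply/eqP/n1.
  move=> l' /setUP [] lT' xl'.
    by have [l2 l2T [e [xl2 xi]]] := fixi _ _ _ n0 lT' xl'; rewrite Exi in xi.
  have [l2 l2T [-> [xl2 xi]]] := fixi _ _ _ n1 lT' xl'.
  by rewrite (ul _ l2T xl2).
have [l [lT xl ul]] := p0 x.
exists (fix_coord l i false); split.
- by rewrite inE; apply/orP; left; apply/imsetP; exists l.
- by rewrite in_fix ?Exi ?xl //; apply/eqP/n0.
move=> l' /setUP [] lT' xl'.
  have [l2 l2T [-> [xl2 xi]]] := fixi _ _ _ n0 lT' xl'.
  by rewrite (ul _ l2T xl2).
by have [l2 l2T [e [xl2 xi]]] := fixi _ _ _ n1 lT' xl'; rewrite Exi in xi.
Qed.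


Lemma tree_sum (R : realFieldType) n d (T : {set rst n}) : is_tree d T ->
  forall F : rst n -> pt n -> R,
  \sum_(l in T) \sum_(x | in_rst x l) F l x =
  \sum_x (if [pick l in T | in_rst x l] is Some l then F l x else 0).
Proof.
move=> tT F; have [_ pT] := tree_part tT.
rewrite (exchange_big_dep predT) //=; apply: eq_bigr => x _.
case: pickP => [l /andP[lT xl] | none]; last by rewrite big_pred0.
rewrite (bigD1 l) ?lT ?xl //= big1 ?addr0 // => l' /andP[/andP[l'T xl'] ne].
have [l0 [_ _ u]] := pT x.
by move: ne; rewrite (u _ l'T xl') (u _ lT xl) eqxx.
Qed.

Lemma tree_pick n d (T : {set rst n}) (x : pt n) : is_tree d T ->
  exists2 l, [pick l in T | in_rst x l] = Some l & (l \in T) && in_rst x l.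
Proof.
move=> tT; have [_ pT] := tree_part tT; have [l0 [l0T xl0 _]] := pT x.
case: pickP => [l H | none]; first by exists l.
by have := none l0; rewrite l0T xl0.
Qed.

Lemma tree_err (R : realFieldType) n d (T : {set rst n}) (H : {ffun rst n -> hyp n})
  (Ds : {ffun pt n -> R}) (f : hyp n) : is_tree d T ->
  error (tree_comp T H) Ds f =
  \sum_(l in T) \sum_(x | in_rst x l) Ds x * (H l x != f x)%:R.
Proof.
move=> tT; rewrite (tree_sum tT) /error; apply: eq_bigr => x _.
rewrite ffunE; have [l -> _] := tree_pick x tT; by [].
Qed.

Lemma tree_mass (R : realFieldType) n d (T : {set rst n}) 
  (Ds : {ffun pt n -> R}) : is_tree d T ->
  \sum_(l in T) mass Ds l = \sum_x Ds x.
Proof.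
move=> tT; rewrite /mass (tree_sum tT); apply: eq_bigr => x _.
by have [l -> _] := tree_pick x tT.
Qed.


Definition fcons n N (x : pt n) (ys : {ffun 'I_N -> pt n}) : {ffun 'I_N.+1 -> pt n} :=
  [ffun i => if unlift ord0 i is Some j then ys j else x].
Definition ftail n N (xs : {ffun 'I_N.+1 -> pt n}) : {ffun 'I_N -> pt n} :=
  [ffun j => xs (lift ord0 j)].

Lemma sum_fcons (R : realFieldType) n N (Phi : {ffun 'I_N.+1 -> pt n} -> R) :
  \sum_xs Phi xs = \sum_x \sum_(ys : {ffun 'I_N -> pt n}) Phi (fcons x ys).
Proof.
rewrite pair_bigA /=.
rewrite (reindex (fun p : pt n * {ffun 'I_N -> pt n} => fcons p.1 p.2)) //=.
exists (fun xs : {ffun 'I_N.+1 -> pt n} => (xs ord0, ftail xs)) => [[x ys] _ | xs _] /=.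
  congr (_, _); first by rewrite ffunE unlift_none.
  by apply/ffunP => j; rewrite !ffunE liftK.
apply/ffunP => i; rewrite !ffunE; case: unliftP => [j ->|->] //.
by rewrite ffunE.
Qed.

Lemma prod_fcons (R : realFieldType) n N (D : {ffun pt n -> R}) (x : pt n) (ys : {ffun 'I_N -> pt n}) :
  \prod_i D (fcons x ys i) = D x * \prod_i D (ys i).
Proof.
by rewrite big_ord_recl !ffunE unlift_none; congr (_ * _); apply: eq_bigr => i _; rewrite ffunE liftK.
Qed.

Lemma sample_fcons n N (x : pt n) (ys : {ffun 'I_N -> pt n}) (f : hyp n) :
  sample (fcons x ys) f = (x, f x) :: sample ys f.
Proof.
rewrite /sample enum_ordSl /= !ffunE unlift_none -map_comp; congr (_ :: _).
by apply: eq_map => j /=; rewrite ffunE liftK.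
Qed.

Lemma peel (R : realFieldType) n N (D : {ffun pt n -> R}) (Phi : {ffun 'I_N.+1 -> pt n} -> R) :
  \sum_(xs : {ffun 'I_N.+1 -> pt n}) (\prod_i D (xs i)) * Phi xs =
  \sum_x D x * \sum_(ys : {ffun 'I_N -> pt n}) (\prod_i D (ys i)) * Phi (fcons x ys).
Proof.
rewrite sum_fcons; apply: eq_bigr => x _; rewrite mulr_sumr; apply: eq_bigr => ys _.
by rewrite prod_fcons mulrA.
Qed.

Lemma sum0 (R : realFieldType) n (Phi : {ffun 'I_0 -> pt n} -> R) xs0 :
  \sum_xs Phi xs = Phi xs0.
Proof.
rewrite (eq_bigr (fun _ => Phi xs0)) ?sumr_const ?card_ffun ?card_ord ?expn0 //.
by move=> xs _; congr Phi; apply/ffunP => -[].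
Qed.

Lemma marg (R : realFieldType) (I J : finType) (a : I -> J -> R) (l : I) (g : J -> R) :
  (forall r, \sum_h a r h = 1) ->
  \sum_(H : {ffun I -> J}) (\prod_r a r (H r)) * g (H l) = \sum_h a l h * g h.
Proof.
move=> a1.
pose F r h := a r h * (if r == l then g h else 1).
have -> : \sum_(H : {ffun I -> J}) (\prod_r a r (H r)) * g (H l) =
          \sum_(H : {ffun I -> J}) \prod_r F r (H r).
  apply: eq_bigr => H _; rewrite /F big_split /=; congr (_ * _).
  by rewrite (bigD1 l) //= eqxx big1 ?mulr1 // => r /negbTE ->.
rewrite -bigA_distr_bigA (bigD1 l) //= [X in _ * X]big1 ?mulr1.
  by apply: eq_bigr => h _; rewrite /F eqxx.
by move=> r /negbTE rl; rewrite /F (eq_bigr (fun h => a r h)) ?a1 // => h _; rewrite rl mulr1.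
Qed.


Definition w (R : realFieldType) (p : R) N k := ('C(N, k))%:R * p ^+ k * (1 - p) ^+ (N - k).

Lemma w00 (R : realFieldType) (p : R) : w p 0 0 = 1.
Proof. by rewrite /w bin0 !expr0 !mulr1. Qed.

Lemma wS0 (R : realFieldType) (p : R) N : w p N.+1 0 = (1 - p) * w p N 0.
Proof. by rewrite /w !bin0 !subn0 exprS; ring. Qed.

Lemma wgt (R : realFieldType) (p : R) N k : (N < k)%N -> w p N k = 0.
Proof. by move=> h; rewrite /w bin_small // !mul0r. Qed.

Lemma wSS (R : realFieldType) (p : R) N k :
  w p N.+1 k.+1 = p * w p N k + (1 - p) * w p N k.+1.
Proof.
rewrite /w binS natrD subSS.
case: (ltnP k N) => h.
  rewrite -(subnSK h) !exprS; ring.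
rewrite (bin_small (n := N) (m := k.+1)) ?ltnS // !exprS; ring.
Qed.

Lemma wge0 (R : realFieldType) (p : R) N k : 0 <= p <= 1 -> 0 <= w p N k.
Proof.
case/andP => p0 p1; rewrite /w; apply: mulr_ge0; first apply: mulr_ge0.
- exact: ler0n.
- exact: exprn_ge0.
by apply: exprn_ge0; rewrite subr_ge0.
Qed.

Lemma wsum (R : realFieldType) (p : R) N : \sum_(0 <= k < N.+1) w p N k = 1.
Proof.
have := exprDn (1 - p) p N; rewrite subrK expr1n => ->.
rewrite big_mkord; apply: eq_bigr => i _; rewrite /w mulr_natl; ring.
Qed.

Lemma wdiag (R : realFieldType) (p : R) N k :
  p * w p N k = (k.+1)%:R / (N.+1)%:R * w p N.+1 k.+1.
Proof.
rewrite /w subSS.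
have hc := mul_bin_diag N.+1 k; rewrite /= in hc.
have hk : (k.+1)%:R != 0 :> R by rewrite pnatr_eq0.
have hN : (N.+1)%:R != 0 :> R by rewrite pnatr_eq0.
have -> : ('C(N.+1, k.+1))%:R = (N.+1)%:R * ('C(N, k))%:R / (k.+1)%:R :> R.
  by rewrite -natrM hc natrM mulrAC divff // mul1r.
rewrite exprS; field.
by rewrite !(addrC 1) !natr1 hk hN.
Qed.


Definition LL (R : realFieldType) n (Ds : {ffun pt n -> R}) (f : hyp n) (l : rst n) N
  (G : seq (pt n * bool) -> R) :=
  \sum_(xs : {ffun 'I_N -> pt n}) (\prod_i Ds (xs i)) * G (restrict_sample (sample xs f) l).

Definition QQ (R : realFieldType) n (D : {ffun pt n -> R}) (f : hyp n) k
  (G : seq (pt n * bool) -> R) :=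
  \sum_(ys : {ffun 'I_k -> pt n}) (\prod_i D (ys i)) * G (sample ys f).

Definition ffun0 n : {ffun 'I_0 -> pt n} := [ffun i => [ffun _ => true]].

Lemma sample0 n (xs : {ffun 'I_0 -> pt n}) (f : hyp n) : sample xs f = [::].
Proof. by rewrite /sample; apply/size0nil; rewrite size_map size_enum_ord. Qed.

Lemma QQ0 (R : realFieldType) n (D : {ffun pt n -> R}) f G : QQ D f 0 G = G [::].
Proof. by rewrite /QQ (sum0 _ (ffun0 n)) big_ord0 mul1r sample0. Qed.

Lemma LL0 (R : realFieldType) n (Ds : {ffun pt n -> R}) f l G : LL Ds f l 0 G = G [::].
Proof. by rewrite /LL (sum0 _ (ffun0 n)) big_ord0 mul1r sample0. Qed.

Lemma QQS (R : realFieldType) n (D : {ffun pt n -> R}) f k G :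
  QQ D f k.+1 G = \sum_x D x * QQ D f k (fun S => G ((x, f x) :: S)).
Proof.
rewrite /QQ peel; apply: eq_bigr => x _; congr (_ * _); apply: eq_bigr => ys _.
by rewrite sample_fcons.
Qed.

Lemma LLS (R : realFieldType) n (Ds : {ffun pt n -> R}) f l N G :
  LL Ds f l N.+1 G = \sum_x Ds x *
     LL Ds f l N (fun S => G (if in_rst x l then (x, f x) :: S else S)).
Proof.
rewrite /LL peel; apply: eq_bigr => x _; congr (_ * _); apply: eq_bigr => ys _.
by rewrite sample_fcons.
Qed.

Lemma QQ_le (R : realFieldType) n (D : {ffun pt n -> R}) f k G1 G2 :
  (forall x, 0 <= D x) -> (forall S, G1 S <= G2 S) -> QQ D f k G1 <= QQ D f k G2.
Proof.
move=> D0 G12; rewrite /QQ; apply: ler_sum => ys _; apply: ler_wpM2l => //.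
by apply: prodr_ge0.
Qed.

Lemma QQ1 (R : realFieldType) n (D : {ffun pt n -> R}) f k :
  is_dist D -> QQ D f k (fun _ => 1) = 1.
Proof.
case=> _ D1; elim: k => [|k IH]; first by rewrite QQ0.
rewrite QQS -[RHS]D1; apply: eq_bigr => x _; by rewrite IH mulr1.
Qed.

Lemma inner (R : realFieldType) n (Ds : {ffun pt n -> R}) f l k G :
  is_dist Ds -> 0 < mass Ds l ->
  \sum_x Ds x * (if in_rst x l then QQ (cond Ds l) f k (fun S => G ((x, f x) :: S))
                  else QQ (cond Ds l) f k G)
  = mass Ds l * QQ (cond Ds l) f k.+1 G + (1 - mass Ds l) * QQ (cond Ds l) f k G.
Proof.
case=> _ D1 p0; set p := mass Ds l.
have hp : p != 0 by rewrite gt_eqF.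
have e1 : 1 - p = \sum_x (if in_rst x l then 0 else Ds x).
  rewrite -D1 /p /mass (bigID (fun x => in_rst x l)) /= addrC addrK big_mkcond /=.
  by apply: eq_bigr => x _; case: (in_rst x l).
rewrite e1 QQS mulr_sumr [(\sum_x _) * QQ _ _ k G]mulr_suml -big_split /=.
apply: eq_bigr => x _.
have cE : cond Ds l x = if in_rst x l then Ds x / p else 0 by rewrite ffunE.
rewrite mulrA cE.
case: (in_rst x l); last by rewrite mulr0 !mul0r add0r.
by rewrite mul0r addr0 mulrCA mulfV // mulr1.
Qed.

Lemma formula (R : realFieldType) n (Ds : {ffun pt n -> R}) f l :
  is_dist Ds -> 0 < mass Ds l -> forall N G,
  LL Ds f l N G = \sum_(0 <= k < N.+1) w (mass Ds l) N k * QQ (cond Ds l) f k G.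
Proof.
move=> dD p0 N; elim: N => [|N IH] G.
  by rewrite LL0 big_nat1 w00 mul1r QQ0.
set p := mass Ds l.
rewrite LLS.
have -> : \sum_x Ds x * LL Ds f l N (fun S => G (if in_rst x l then (x, f x) :: S else S))
  = \sum_(0 <= k < N.+1) w p N k * (p * QQ (cond Ds l) f k.+1 G + (1 - p) * QQ (cond Ds l) f k G).
  rewrite -(eq_bigr _ (fun k _ => congr1 (fun t => w p N k * t) (inner f k G dD p0))).
  under eq_bigr do rewrite mulr_sumr.
  rewrite exchange_big /=; apply: eq_bigr => x _.
  rewrite IH mulr_sumr; apply: eq_bigr => k _.
  by case: (in_rst x l); rewrite mulrCA.
rewrite [in RHS]big_nat_recl // wS0.
under [in RHS]eq_bigr do rewrite wSS mulrDl.
rewrite big_split /=.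
have e2 : \sum_(0 <= k < N.+1) w p N k * QQ (cond Ds l) f k G =
  w p N 0 * QQ (cond Ds l) f 0 G + \sum_(0 <= k < N.+1) w p N k.+1 * QQ (cond Ds l) f k.+1 G.
  by rewrite big_nat_recl // [in RHS]big_nat_recr //= [w p N N.+1]wgt // mul0r addr0.
under [in LHS]eq_bigr do rewrite mulrDr.
rewrite big_split /=.
set Q := QQ (cond Ds l) f.
have a1 : \sum_(0 <= i < N.+1) w p N i * (p * Q i.+1 G) = p * \sum_(0 <= i < N.+1) w p N i * Q i.+1 G.
  by rewrite mulr_sumr; apply: eq_bigr => i _; ring.
have a2 : \sum_(0 <= i < N.+1) w p N i * ((1 - p) * Q i G) = (1 - p) * \sum_(0 <= i < N.+1) w p N i * Q i G.
  by rewrite mulr_sumr; apply: eq_bigr => i _; ring.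
have a3 : \sum_(0 <= i < N.+1) p * w p N i * Q i.+1 G = p * \sum_(0 <= i < N.+1) w p N i * Q i.+1 G.
  by rewrite mulr_sumr; apply: eq_bigr => i _; ring.
have a4 : \sum_(0 <= i < N.+1) (1 - p) * w p N i.+1 * Q i.+1 G = (1 - p) * \sum_(0 <= i < N.+1) w p N i.+1 * Q i.+1 G.
  by rewrite mulr_sumr; apply: eq_bigr => i _; ring.
rewrite a1 a2 a3 a4 e2 /Q; ring.
Qed.


Lemma mass_ge0 (R : realFieldType) n (Ds : {ffun pt n -> R}) l :
  is_dist Ds -> 0 <= mass Ds l.
Proof. by case=> D0 _; apply: sumr_ge0 => x _. Qed.

Lemma mass_le1 (R : realFieldType) n (Ds : {ffun pt n -> R}) l :
  is_dist Ds -> mass Ds l <= 1.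
Proof.
case=> D0 D1; rewrite -D1 /mass [X in _ <= X](bigID (fun x => in_rst x l)) /=.
by rewrite lerDl; apply: sumr_ge0 => x _.
Qed.

Lemma err_le1 (R : realFieldType) n (h : hyp n) (D : {ffun pt n -> R}) f :
  is_dist D -> error h D f <= 1.
Proof.
case=> D0 D1; rewrite -D1 /error; apply: ler_sum => x _.
by rewrite ler_piMr // lern1 leq_b1.
Qed.

Lemma E_le1 (R : realFieldType) n (a : {ffun hyp n -> R}) (D : {ffun pt n -> R}) f :
  is_dist a -> is_dist D -> \sum_h a h * error h D f <= 1.
Proof.
case=> a0 a1 dD; rewrite -a1; apply: ler_sum => h _.
by rewrite ler_piMr // err_le1.
Qed.

Lemma leaf_bound (R : realFieldType) n (C : hyp n -> Prop) (Dc : {ffun pt n -> R} -> Prop)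
  (Ds : {ffun pt n -> R}) (A : learner R n) (m : nat) (eps : R) (mt : nat) (f : hyp n) l :
  is_dist Ds -> 0 < mass Ds l -> Dc (cond Ds l) -> is_dist (cond Ds l) ->
  (forall S, is_dist (A S)) -> learns C Dc A m eps -> 0 < eps -> C f ->
  mass Ds l * LL Ds f l mt (fun S => \sum_h A S h * error h (cond Ds l) f)
    <= mass Ds l * eps + m%:R / (mt.+1)%:R.
Proof.
move=> dD p0 Dcc dc dA lA e0 Cf.
set p := mass Ds l.
set E := (fun S => _).
have p1 : p <= 1 by apply: mass_le1.
have pp : 0 <= p <= 1 by rewrite p1 ltW.
have wp k N : 0 <= w p N k by apply: wge0.
have QE k : QQ (cond Ds l) f k E <= (k < m)%N%:R + eps.
  case: (ltnP k m) => km.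
    apply: le_trans (QQ_le _ _ _ (fun S => E_le1 f (dA S) dc)) _; first by case: dc.
    by rewrite QQ1 // lerDl ltW.
  by rewrite add0r; apply: lA.
rewrite formula //.
have s1 : \sum_(0 <= k < mt.+1) w p mt k * QQ (cond Ds l) f k E <=
          \sum_(0 <= k < mt.+1) w p mt k * (k < m)%N%:R + eps.
  apply: le_trans (_ : \sum_(0 <= k < mt.+1) w p mt k * ((k < m)%N%:R + eps) <= _).
    by apply: ler_sum => k _; apply: ler_wpM2l.
  under eq_bigr do rewrite mulrDr.
  by rewrite big_split /= -mulr_suml wsum mul1r.
have s2 : p * \sum_(0 <= k < mt.+1) w p mt k * (k < m)%N%:R <= m%:R / (mt.+1)%:R.
  rewrite mulr_sumr.
  apply: le_trans (_ : \sum_(0 <= k < mt.+1) m%:R / (mt.+1)%:R * w p mt.+1 k.+1 <= _).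
    apply: ler_sum => k _; rewrite mulrA wdiag.
    rewrite mulrAC ler_wpM2r // mulrAC ler_wpM2r ?invr_ge0 ?ler0n //.
    rewrite -natrM ler_nat; case: (ltnP k m) => km.
      by rewrite /= muln1.
    by rewrite /= muln0.
  rewrite -mulr_sumr ler_piMr ?divr_ge0 ?ler0n //.
  have := wsum p mt.+1; rewrite big_nat_recl // => e.
  by rewrite -e lerDr.
have := ler_wpM2l (ltW p0) s1; rewrite mulrDr => h.
apply: le_trans h _; rewrite addrC lerD2l; exact: s2.
Qed.


Theorem claim6p6 (R : realFieldType) (n : nat)
  (C : hyp n -> Prop) (Dc : {ffun pt n -> R} -> Prop)
  (Ds : {ffun pt n -> R}) (d : nat) (A : learner R n) (m : nat) (eps : R)
  (mt : nat) (f : hyp n) :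
  (forall D, Dc D -> is_dist D) ->
  closed_under_restrictions Dc ->
  is_dist Ds ->
  has_decomposition Ds Dc d ->
  (forall S, is_dist (A S)) ->
  learns C Dc A m eps ->
  0 < eps ->
  (2 ^ d)%:R / eps * (maxn (2 * m) 8)%:R <= mt%:R ->
  C f ->
  expected_min_tree_error A Ds f d mt <= 2 * eps.
Proof.
move=> hD hcl dDs [T [tT hT]] dA lA e0 hmt Cf.
have [D0 D1] := dDs.
have prodD0 N (xs : {ffun 'I_N -> pt n}) : 0 <= \prod_i Ds (xs i).
  by apply: prodr_ge0 => i _.
pose a (xs : {ffun 'I_mt -> pt n}) r := A (restrict_sample (sample xs f) r).
pose e l (h : hyp n) := \sum_(x | in_rst x l) Ds x * (h x != f x)%:R.
pose LT l := \sum_(xs : {ffun 'I_mt -> pt n}) (\prod_i Ds (xs i)) * \sum_h a xs l h * e l h.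
have step1 : expected_min_tree_error A Ds f d mt <= \sum_(l in T) LT l.
  apply: le_trans (_ : \sum_(xs : {ffun 'I_mt -> pt n}) (\prod_i Ds (xs i)) *
     \sum_(H : {ffun rst n -> hyp n}) (\prod_r a xs r (H r)) * error (tree_comp T H) Ds f <= _).
    apply: ler_sum => xs _; apply: ler_wpM2l; first exact: prodD0.
    apply: ler_sum => H _; apply: ler_wpM2l.
      by apply: prodr_ge0 => r _; case: (dA (restrict_sample (sample xs f) r)).
    exact: bigmin_le_cond.
  rewrite /LT exchange_big /=; apply: ler_sum => xs _.
  rewrite -mulr_sumr; apply: ler_wpM2l; first exact: prodD0.
  under eq_bigr do rewrite (tree_err _ _ _ tT) mulr_sumr.
  rewrite exchange_big /=; apply: ler_sum => l _.
  rewrite (@marg _ _ _ (a xs) l (e l)) //.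
  by move=> r; case: (dA (restrict_sample (sample xs f) r)).
have step3 : forall l, l \in T -> LT l <= mass Ds l * eps + m%:R / (mt.+1)%:R.
  move=> l lT.
  have p0 : 0 <= mass Ds l := mass_ge0 l dDs.
  have rhs0 : 0 <= mass Ds l * eps + m%:R / (mt.+1)%:R.
    by apply: addr_ge0; [apply: mulr_ge0 => //; exact: ltW | apply: divr_ge0].
  have [pz|ppos] : mass Ds l = 0 \/ 0 < mass Ds l.
    by move: p0; rewrite le0r => /orP[/eqP|]; [left|right].
    have ez h : e l h = 0.
      rewrite /e; apply: big1 => x xl.
      have H := psumr_eq0P (fun y _ => D0 y) pz.
      by rewrite H ?mul0r.
    rewrite /LT big1 // => xs _; rewrite [X in _ * X]big1 ?mulr0 // => h _.
    by rewrite ez mulr0.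
  have Dcc := hT l lT ppos; have dc := hD _ Dcc.
  have hp : mass Ds l != 0 by rewrite gt_eqF.
  have ez h : e l h = mass Ds l * error h (cond Ds l) f.
    rewrite /e /error mulr_sumr big_mkcond /=; apply: eq_bigr => x _.
    rewrite ffunE; case: (in_rst x l); last by rewrite mul0r mulr0.
    by field.
  have -> : LT l = mass Ds l * LL Ds f l mt (fun S => \sum_h A S h * error h (cond Ds l) f).
    rewrite /LT /LL mulr_sumr; apply: eq_bigr => xs _.
    rewrite mulrCA; congr (_ * _); rewrite mulr_sumr; apply: eq_bigr => h _.
    by rewrite ez /a mulrCA.
  exact: (@leaf_bound R n C Dc Ds A m eps mt f l dDs ppos Dcc dc dA lA e0 Cf).
have hsum : \sum_(l in T) (mass Ds l * eps + m%:R / (mt.+1)%:R)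
    = eps + #|T|%:R * (m%:R / (mt.+1)%:R).
  rewrite big_split /= -mulr_suml (tree_mass _ tT) D1 mul1r sumr_const.
  by congr (_ + _); rewrite [RHS]mulr_natl.
have [cT _] := tree_part tT.
have h1 : (2 ^ d)%:R * (2 * m)%:R <= eps * mt%:R.
  have h2 : (2 ^ d)%:R / eps * (2 * m)%:R <= mt%:R.
    apply: le_trans hmt; apply: ler_wpM2l.
      by apply: divr_ge0 => //; exact: ltW.
    by rewrite ler_nat leq_maxl.
  have := ler_wpM2l (ltW e0) h2.
  by rewrite mulrA mulrCA mulfV ?gt_eqF // mulr1.
have h3 : #|T|%:R * (m%:R / (mt.+1)%:R) <= eps.
  rewrite mulrA ler_pdivrMr ?ltr0Sn //.
  apply: le_trans (_ : (2 ^ d)%:R * (2 * m)%:R <= _).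
    by rewrite -!natrM ler_nat; apply: leq_mul => //; apply: leq_pmull.
  apply: le_trans h1 _; apply: ler_wpM2l; first exact: ltW.
  by rewrite ler_nat.
apply: (le_trans step1); apply: (le_trans (ler_sum _ step3)).
rewrite hsum (_ : 2 * eps = eps + eps); last by rewrite mulr2n mulrDl mul1r.
rewrite lerD2l; exact: h3.
Qed.
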